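(* Let $(X,\tau)$ be a zero-dimensional, perfect, compact $T_1$-space and let $(Y,\tau_d)$ be a dendrite with metric $d$. Then there exists a continuous, closed map $f$ of $X$ onto $Y$ such that the decomposition $\mathcal D_f=\{f^{-1}(y);\, y\in Y\}$ of $X$ is upper semicontinuous and the map $h:(Y,\tau_d)\to(\mathcal D_f,\tau(\mathcal D_f))$, $y\mapsto f^{-1}(y)$, is a homeomorphism. Consequently the decomposition space $(\mathcal D_f,\tau(\mathcal D_f))$ is metrizable by the metric $\rho(D,D')=d(h^{-1}(D),h^{-1}(D'))$ (i.e. $\tau(\mathcal D_f)=\tau_\rho$), and $(\mathcal D_f,\tau_\rho)$ is a dendrite.
   Context: A space is zero-dimensional if it has a base consisting of sets that are both closed and open (clopen). A space is perfect if it has no isolated points. A dendrite is a locally connected, connected, compact metric space containing no simple closed curve (no subspace homeomorphic to a circle). A decomposition $\mathcal D$ of a set $X$ is a collection of nonempty, pairwise disjoint subsets of $X$ whose union is $X$; for a topological space $(X,\tau)$ the decomposition topology is $\tau(\mathcal D)=\{\mathcal U\subset\mathcal D;\ \bigcup_{D\in\mathcal U}D\in\tau\}$, and $(\mathcal D,\tau(\mathcal D))$ is the decomposition space. A decomposition $\mathcal D$ is upper semicontinuous (usc) if for every $D\in\mathcal D$ and every open $U\supseteq D$ there is an open $u\supseteq D$ such that every $A\in\mathcal D$ with $A\cap u\neq\emptyset$ satisfies $A\subset U$. *)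

(* Defs.v *)
From Stdlib Require Import Reals List.
Open Scope R_scope.

Definition set (T : Type) := T -> Prop.

Definition is_topology {T : Type} (op : set T -> Prop) : Prop :=
  op (fun _ => True) /\ op (fun _ => False) /\
  (forall F : set T -> Prop, (forall U, F U -> op U) ->
      op (fun x => exists U, F U /\ U x)) /\
  (forall U V, op U -> op V -> op (fun x => U x /\ V x)).

Definition is_closed {T : Type} (op : set T -> Prop) (C : set T) : Prop :=
  op (fun x => ~ C x).

Definition clopen {T : Type} (op : set T -> Prop) (U : set T) : Prop :=
  op U /\ is_closed op U.

Definition T1_space {T : Type} (op : set T -> Prop) : Prop :=
  forall x y : T, x <> y -> exists U, op U /\ U x /\ ~ U y.

Definition zero_dimensional {T : Type} (op : set T -> Prop) : Prop :=
  forall U x, op U -> U x -> exists V, clopen op V /\ V x /\ (forall y, V y -> U y).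

Definition perfect {T : Type} (op : set T -> Prop) : Prop :=
  forall x : T, ~ op (fun y => y = x).

Definition compact_space {T : Type} (op : set T -> Prop) : Prop :=
  forall C : set T -> Prop,
    (forall U, C U -> op U) -> (forall x, exists U, C U /\ U x) ->
    exists l : list (set T), (forall U, In U l -> C U) /\
                             (forall x, exists U, In U l /\ U x).

Definition continuous {A B : Type} (opA : set A -> Prop) (opB : set B -> Prop)
  (f : A -> B) : Prop :=
  forall V, opB V -> opA (fun x => V (f x)).

Definition image {A B : Type} (f : A -> B) (C : set A) : set B :=
  fun y => exists x, C x /\ f x = y.

Definition closed_map {A B : Type} (opA : set A -> Prop) (opB : set B -> Prop)
  (f : A -> B) : Prop :=
  forall C, is_closed opA C -> is_closed opB (image f C).

Definition homeomorphism {A B : Type} (opA : set A -> Prop) (opB : set B -> Prop)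
  (h : A -> B) (g : B -> A) : Prop :=
  (forall a, g (h a) = a) /\ (forall b, h (g b) = b) /\
  continuous opA opB h /\ continuous opB opA g.

Definition homeomorphic {A B : Type} (opA : set A -> Prop) (opB : set B -> Prop) : Prop :=
  exists (h : A -> B) (g : B -> A), homeomorphism opA opB h g.

Definition subspace {T : Type} (op : set T -> Prop) (S : set T)
  : set {x : T | S x} -> Prop :=
  fun W => exists U, op U /\ forall z : {x : T | S x}, W z <-> U (proj1_sig z).

Definition connected_set {T : Type} (op : set T -> Prop) (S : set T) : Prop :=
  ~ exists U V, op U /\ op V /\
      (forall x, S x -> U x \/ V x) /\
      (exists x, S x /\ U x) /\ (exists x, S x /\ V x) /\
      (forall x, S x -> U x -> V x -> False).

Definition locally_connected {T : Type} (op : set T -> Prop) : Prop :=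
  forall U x, op U -> U x ->
    exists V, op V /\ V x /\ (forall y, V y -> U y) /\ connected_set op V.

Definition is_metric {T : Type} (d : T -> T -> R) : Prop :=
  (forall x y, d x y = 0 <-> x = y) /\
  (forall x y, d x y = d y x) /\
  (forall x y z, d x z <= d x y + d y z).

Definition metric_open {T : Type} (d : T -> T -> R) (U : set T) : Prop :=
  forall x, U x -> exists eps, 0 < eps /\ forall y, d x y < eps -> U y.

Definition euclid2 (p q : R * R) : R :=
  sqrt ((fst p - fst q) ^ 2 + (snd p - snd q) ^ 2).

Definition circle_set : set (R * R) :=
  fun p => fst p ^ 2 + snd p ^ 2 = 1.

Definition circle_top : set {p : R * R | circle_set p} -> Prop :=
  subspace (metric_open euclid2) circle_set.

Definition dendrite (T : Type) (d : T -> T -> R) : Prop :=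
  is_metric d /\ inhabited T /\
  compact_space (metric_open d) /\
  connected_set (metric_open d) (fun _ => True) /\
  locally_connected (metric_open d) /\
  ~ (exists A : set T, homeomorphic (subspace (metric_open d) A) circle_top).

Definition decomp_space {X : Type} (Dc : set (set X)) : Type :=
  {D : set X | Dc D}.

Definition decomp_top {X : Type} (tau : set X -> Prop) (Dc : set (set X))
  : set (decomp_space Dc) -> Prop :=
  fun U => tau (fun x => exists D : decomp_space Dc, U D /\ proj1_sig D x).

Definition usc {X : Type} (tau : set X -> Prop) (Dc : set (set X)) : Prop :=
  forall D U, Dc D -> tau U -> (forall x, D x -> U x) ->
    exists u, tau u /\ (forall x, D x -> u x) /\
      forall A, Dc A -> (exists x, A x /\ u x) -> forall x, A x -> U x.

Definition fiber {X Y : Type} (f : X -> Y) (y : Y) : set X := fun x => f x = y.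

Definition Dfib {X Y : Type} (f : X -> Y) : set (set X) :=
  fun D => exists y, D = fiber f y.

Definition hmap {X Y : Type} (f : X -> Y) (y : Y) : decomp_space (Dfib f) :=
  exist (Dfib f) (fiber f y) (ex_intro _ y eq_refl).

(* Main.v *)
Require Import Defs.
From Stdlib Require Import Reals.
From Stdlib Require Import Lra Lia List Classical FunctionalExtensionality PropExtensionality ProofIrrelevance IndefiniteDescription.
Import ListNotations.
Open Scope R_scope.

Lemma set_ext {T} (U V : set T) : (forall x, U x <-> V x) -> U = V.
Proof. intros H; apply functional_extensionality; intros x; apply propositional_extensionality; auto. Qed.

Lemma op_ext {T} (op : set T -> Prop) U V : (forall x, U x <-> V x) -> op U -> op V.
Proof. intros H; rewrite (set_ext U V H); auto. Qed.

Lemma top_union {T} (op : set T -> Prop) U V : is_topology op -> op U -> op V -> op (fun x => U x \/ V x).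
Proof.
  intros [_ [_ [Hu _]]] HU HV.
  apply (op_ext op (fun x => exists W, (W = U \/ W = V) /\ W x)).
  - intros x; split. intros [W [[->| ->] Hx]]; auto. intros [Hx|Hx]; eauto.
  - apply Hu. intros W [->| ->]; auto.
Qed.

Lemma top_inter {T} (op : set T -> Prop) U V : is_topology op -> op U -> op V -> op (fun x => U x /\ V x).
Proof. intros [_ [_ [_ Hi]]] HU HV; auto. Qed.

Lemma open_local {T} (op : set T -> Prop) S : is_topology op ->
  (forall x, S x -> exists P, op P /\ P x /\ forall x', P x' -> S x') -> op S.
Proof.
  intros Ht H. destruct Ht as [_ [_ [Hu _]]].
  apply (op_ext op (fun x => exists P, (op P /\ forall x', P x' -> S x') /\ P x)).
  - intros x; split. intros [P [[_ HP] Hx]]; auto.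
    intros Hx; destruct (H x Hx) as [P [HP [HPx HPS]]]; eauto.
  - apply Hu. intros P [HP _]; auto.
Qed.

Lemma compact_incr {T} (op : set T -> Prop) (O : nat -> set T) :
  compact_space op -> (forall n, op (O n)) -> (forall n x, O n x -> O (S n) x) ->
  (forall x, exists n, O n x) -> exists N, forall x, O N x.
Proof.
  intros Hc Ho Hinc Hcov.
  assert (Hmono: forall n m, (n <= m)%nat -> forall x, O n x -> O m x).
  { intros n m Hnm; induction Hnm; auto. }
  destruct (Hc (fun U => exists n, U = O n)) as [l [Hl1 Hl2]].
  - intros U [n ->]; auto.
  - intros x; destruct (Hcov x) as [n Hn]; eauto.
  - assert (exists N, forall U, In U l -> exists n, (n <= N)%nat /\ U = O n) as [N HN].
    { clear Hl2. induction l as [|U l IH].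
      - exists 0%nat; intros U [].
      - destruct IH as [N HN]. intros; apply Hl1; right; auto.
        destruct (Hl1 U (or_introl eq_refl)) as [n ->].
        exists (Nat.max n N). intros V [<-|HV].
        + exists n; split; auto; lia.
        + destruct (HN V HV) as [k [Hk ->]]. exists k; split; auto; lia. }
    exists N; intros x.
    destruct (Hl2 x) as [U [HU Hx]]. destruct (HN U HU) as [n [Hn ->]]. eapply Hmono; eauto.
Qed.

Lemma clopen_compl {T} (op : set T -> Prop) U : clopen op U -> clopen op (fun x => ~ U x).
Proof.
  intros [Ho Hc]; split; auto. unfold is_closed.
  apply (op_ext op U); auto. intros x; split; auto. apply NNPP.
Qed.

Lemma clopen_inter {T} (op : set T -> Prop) U V : is_topology op -> clopen op U -> clopen op V ->
  clopen op (fun x => U x /\ V x).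
Proof.
  intros Ht [HU HU'] [HV HV']; split. apply top_inter; auto.
  unfold is_closed. apply (op_ext op (fun x => ~ U x \/ ~ V x)).
  - intros x; tauto.
  - apply top_union; auto.
Qed.

Lemma d_refl {T} (d : T -> T -> R) x : is_metric d -> d x x = 0.
Proof. intros [H _]; apply H; auto. Qed.

Lemma d_nonneg {T} (d : T -> T -> R) x y : is_metric d -> 0 <= d x y.
Proof.
  intros Hm. pose proof (d_refl d x Hm). destruct Hm as [_ [Hs Ht]].
  specialize (Ht x y x). rewrite (Hs y x) in Ht. lra.
Qed.

Lemma mo_ext {T} (d : T -> T -> R) U V : (forall x, U x <-> V x) -> metric_open d U -> metric_open d V.
Proof.
  intros H HU x Hx. destruct (HU x (proj2 (H x) Hx)) as [e [He Hy]].
  exists e; split; auto. intros y Hy'; apply H; auto.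
Qed.

Lemma mo_union {T} (d : T -> T -> R) U V : metric_open d U -> metric_open d V -> metric_open d (fun x => U x \/ V x).
Proof.
  intros HU HV x [Hx|Hx].
  - destruct (HU x Hx) as [e [He H]]; exists e; split; auto.
  - destruct (HV x Hx) as [e [He H]]; exists e; split; auto.
Qed.

Lemma ball_open {T} (d : T -> T -> R) c r : is_metric d -> metric_open d (fun y => d c y < r).
Proof.
  intros Hm x Hx. exists (r - d c x); split. lra.
  intros y Hy. destruct Hm as [_ [_ Ht]]. pose proof (Ht c x y). lra.
Qed.

Lemma cball_closed {T} (d : T -> T -> R) c r : is_metric d -> is_closed (metric_open d) (fun y => d c y <= r).
Proof.
  intros Hm x Hx. exists (d c x - r); split. lra.
  intros y Hy. destruct Hm as [_ [Hs Ht]]. pose proof (Ht c y x). rewrite (Hs y x) in H. lra.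
Qed.

Lemma closed_inter {T} (d : T -> T -> R) U V : is_closed (metric_open d) U -> is_closed (metric_open d) V ->
  is_closed (metric_open d) (fun x => U x /\ V x).
Proof.
  intros HU HV. unfold is_closed. apply (mo_ext d (fun x => ~ U x \/ ~ V x)).
  intros x; tauto. apply mo_union; auto.
Qed.

Lemma split2 {X} (tau : set X -> Prop) P : is_topology tau -> zero_dimensional tau -> perfect tau ->
  T1_space tau -> clopen tau P -> (exists x, P x) ->
  exists Q1 Q2, clopen tau Q1 /\ clopen tau Q2 /\ (exists x, Q1 x) /\ (exists x, Q2 x) /\
    (forall x, P x <-> Q1 x \/ Q2 x) /\ (forall x, Q1 x -> Q2 x -> False).
Proof.
  intros Ht Hz Hp H1 HP [x0 Hx0].
  assert (exists x1, P x1 /\ x1 <> x0) as [x1 [Hx1 Hne]].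
  { apply NNPP; intros Hn. apply (Hp x0). apply (op_ext tau P); [|apply HP].
    intros x; split. intros Hx. apply NNPP; intros Hx'. apply Hn; eauto.
    intros ->; auto. }
  destruct (H1 x0 x1 (not_eq_sym Hne)) as [U [HU [HUx0 HUx1]]].
  destruct (Hz U x0 HU HUx0) as [V [HV [HVx0 HVU]]].
  exists (fun x => P x /\ V x), (fun x => P x /\ ~ V x).
  split. apply clopen_inter; auto.
  split. apply clopen_inter; auto. apply clopen_compl; auto.
  split. eauto. split. exists x1; split; auto.
  split. intros x; tauto. intros x; tauto.
Qed.

Definition valid {X Y} (tau : set X -> Prop) (d : Y -> Y -> R) (c : set X * set Y) : Prop :=
  (exists x, fst c x) /\ clopen tau (fst c) /\ is_closed (metric_open d) (snd c) /\ (exists y, snd c y).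

Definition good {X Y} (tau : set X -> Prop) (d : Y -> Y -> R) (c : set X * set Y) (eps : R)
  (l : list (set X * set Y)) : Prop :=
 (forall c', In c' l -> valid tau d c') /\
 (forall c', In c' l -> (forall x, fst c' x -> fst c x) /\ (forall y, snd c' y -> snd c y)) /\
 (forall c1 c2, In c1 l -> In c2 l -> (exists x, fst c1 x /\ fst c2 x) -> c1 = c2) /\
 (forall x, fst c x -> exists c', In c' l /\ fst c' x) /\
 (forall y, snd c y -> exists c', In c' l /\ snd c' y) /\
 (forall c', In c' l -> forall y y', snd c' y -> snd c' y' -> d y y' <= eps).

Lemma zip_lemma {X Y} (tau : set X -> Prop) : is_topology tau -> zero_dimensional tau -> perfect tau ->
  T1_space tau -> forall (ks : list (set Y)) k P, clopen tau P -> (exists x, P x) ->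
  exists l : list (set X * set Y),
    (forall c, In c l -> (exists x, fst c x) /\ clopen tau (fst c) /\ In (snd c) (k :: ks)) /\
    (forall c1 c2, In c1 l -> In c2 l -> (exists x, fst c1 x /\ fst c2 x) -> c1 = c2) /\
    (forall x, P x -> exists c, In c l /\ fst c x) /\
    (forall c, In c l -> forall x, fst c x -> P x) /\
    (forall k', In k' (k :: ks) -> exists c, In c l /\ snd c = k').
Proof.
  intros Ht Hz Hp H1 ks. induction ks as [|k2 ks IH]; intros k P HP HPn.
  - exists [(P, k)]. split; [|split; [|split; [|split]]].
    + intros c [<-|[]]; simpl; auto.
    + intros c1 c2 [<-|[]] [<-|[]]; auto.
    + intros x Hx; exists (P,k); simpl; auto.
    + intros c [<-|[]]; simpl; auto.
    + intros k' [<-|[]]; exists (P,k); simpl; auto.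
  - destruct (split2 tau P Ht Hz Hp H1 HP HPn) as [Q1 [Q2 [HQ1 [HQ2 [HQ1n [HQ2n [HPQ HD]]]]]]].
    destruct (IH k2 Q2 HQ2 HQ2n) as [l [A [B [C [D E]]]]].
    exists ((Q1, k) :: l). split; [|split; [|split; [|split]]].
    + intros c [<-|Hc]; simpl. auto.
      destruct (A c Hc) as [? [? Hin]]; split; [|split]; auto; simpl in Hin |- *; tauto.
    + intros c1 c2 [<-|H1'] [<-|H2'] [x [Hx1 Hx2]]; auto; simpl in *.
      * exfalso; apply (HD x); auto. apply (D c2); auto.
      * exfalso; apply (HD x); auto. apply (D c1); auto.
      * apply B; eauto.
    + intros x Hx. apply HPQ in Hx as [Hx|Hx].
      exists (Q1,k); simpl; auto.
      destruct (C x Hx) as [c [? ?]]; exists c; simpl; auto.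
    + intros c [<-|Hc] x Hx; simpl in *. apply HPQ; auto. apply HPQ; right; eapply D; eauto.
    + intros k' [<-|Hk']. exists (Q1,k); simpl; auto.
      destruct (E k' Hk') as [c [? ?]]; exists c; simpl; auto.
Qed.

Lemma ball_cover {Y} (d : Y -> Y -> R) : is_metric d -> compact_space (metric_open d) ->
  forall K eps, is_closed (metric_open d) K -> (exists y, K y) -> 0 < eps ->
  exists k ks, (forall k', In k' (k :: ks) -> is_closed (metric_open d) k' /\ (exists y, k' y) /\
       (forall y, k' y -> K y) /\ (forall y y', k' y -> k' y' -> d y y' <= eps)) /\
    (forall y, K y -> exists k', In k' (k :: ks) /\ k' y).
Proof.
  intros Hm Hc K eps HK [y0 Hy0] He.
  destruct (Hc (fun U => exists c, U = fun y => d c y < eps / 2)) as [l [Hl1 Hl2]].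
  - intros U [c ->]. apply ball_open; auto.
  - intros x. exists (fun y => d x y < eps/2). split; eauto. rewrite d_refl; auto; lra.
  - assert (exists ks, (forall k', In k' ks -> is_closed (metric_open d) k' /\ (exists y, k' y) /\
       (forall y, k' y -> K y) /\ (forall y y', k' y -> k' y' -> d y y' <= eps)) /\
      (forall U, In U l -> forall y, K y -> U y -> exists k', In k' ks /\ k' y)) as [ks [A B]].
    { clear Hl2. induction l as [|U l IH].
      - exists []; split; intros ? [].
      - destruct IH as [ks [A B]]. intros; apply Hl1; simpl; auto.
        destruct (Hl1 U (or_introl eq_refl)) as [c ->].
        destruct (classic (exists y, K y /\ d c y <= eps/2)) as [Hex|Hnex].
        + exists ((fun y => K y /\ d c y <= eps/2) :: ks). split.
          * intros k' [<-|Hk']; auto. split; [|split; [|split]].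
            -- apply closed_inter; auto. apply cball_closed; auto.
            -- auto.
            -- intros y [? ?]; auto.
            -- intros y y' [_ H1'] [_ H2']. destruct Hm as [_ [Hs Ht]].
               pose proof (Ht y c y'). rewrite (Hs y c) in H. lra.
          * intros U [<-|HU] y Hy HUy.
            -- exists (fun y => K y /\ d c y <= eps/2); simpl; split; auto. split; auto; lra.
            -- destruct (B U HU y Hy HUy) as [k' [? ?]]; exists k'; simpl; auto.
        + exists ks; split; auto. intros U' [<-|HU] y Hy HUy.
          * exfalso; apply Hnex; exists y; split; auto; lra.
          * eauto. }
    destruct ks as [|k ks].
    + exfalso. destruct (Hl2 y0) as [U [HU HUy]]. destruct (B U HU y0 Hy0 HUy) as [? [[] _]].
    + exists k, ks; split; auto. intros y Hy. destruct (Hl2 y) as [U [HU HUy]]. eauto.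
Qed.

Lemma refine_good {X Y} (tau : set X -> Prop) (d : Y -> Y -> R) :
  is_topology tau -> zero_dimensional tau -> perfect tau -> T1_space tau ->
  is_metric d -> compact_space (metric_open d) ->
  forall c eps, valid tau d c -> 0 < eps -> exists l, good tau d c eps l.
Proof.
  intros Ht Hz Hp H1 Hm Hc [P K] eps [HPn [HP [HK HKn]]] He; simpl in *.
  destruct (ball_cover d Hm Hc K eps HK HKn He) as [k [ks [A B]]].
  destruct (zip_lemma tau Ht Hz Hp H1 ks k P HP HPn) as [l [C [D [E [F G]]]]].
  exists l. split; [|split; [|split; [|split; [|split]]]]; simpl.
  - intros c' Hc'. destruct (C c' Hc') as [? [? Hin]]. destruct (A _ Hin) as [? [? _]].
    unfold valid; auto.
  - intros c' Hc'. split. apply F; auto. destruct (C c' Hc') as [? [? Hin]]. apply (A _ Hin).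
  - auto.
  - auto.
  - intros y Hy. destruct (B y Hy) as [k' [Hk' Hy']]. destruct (G k' Hk') as [c [? <-]]; eauto.
  - intros c' Hc'. destruct (C c' Hc') as [? [? Hin]]. apply (A _ Hin).
Qed.

Lemma refine_fun {X Y} (tau : set X -> Prop) (d : Y -> Y -> R) :
  is_topology tau -> zero_dimensional tau -> perfect tau -> T1_space tau ->
  is_metric d -> compact_space (metric_open d) ->
  exists r : set X * set Y -> R -> list (set X * set Y),
    forall c eps, valid tau d c -> 0 < eps -> good tau d c eps (r c eps).
Proof.
  intros Ht Hz Hp H1 Hm Hc.
  assert (H : forall c eps, exists l, valid tau d c -> 0 < eps -> good tau d c eps l).
  { intros c eps. destruct (classic (valid tau d c /\ 0 < eps)) as [[Hv He]|Hn].
    - destruct (refine_good tau d Ht Hz Hp H1 Hm Hc c eps Hv He) as [l Hl]; eauto.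
    - exists []; intros; exfalso; auto. }
  exists (fun c eps => proj1_sig (constructive_indefinite_description _ (H c eps))).
  intros c eps; destruct (constructive_indefinite_description _ (H c eps)); simpl; auto.
Qed.

Definition level {X Y} (r : set X * set Y -> R -> list (set X * set Y)) : nat -> list (set X * set Y) :=
 fix lev n := match n with O => [((fun _ => True), (fun _ => True))]
   | S m => flat_map (fun c => r c (/ INR (S m))) (lev m) end.

Lemma eps_pos n : 0 < / INR (S n).
Proof. apply Rinv_0_lt_compat, lt_0_INR; lia. Qed.

Lemma level_inv {X Y} (tau : set X -> Prop) (d : Y -> Y -> R) r :
  is_topology tau -> inhabited X -> inhabited Y ->
  (forall c eps, valid tau d c -> 0 < eps -> good tau d c eps (r c eps)) ->
  forall n, (forall c, In c (level r n) -> valid tau d c) /\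
    (forall c1 c2, In c1 (level r n) -> In c2 (level r n) -> (exists x, fst c1 x /\ fst c2 x) -> c1 = c2) /\
    (forall x, exists c, In c (level r n) /\ fst c x) /\
    (forall y, exists c, In c (level r n) /\ snd c y).
Proof.
  intros Ht [x0] [y0] Hr n. induction n as [|n IH].
  - simpl. split; [|split; [|split]].
    + intros c [<-|[]]. split; [|split; [|split]]; simpl; eauto.
      * split. apply Ht. unfold is_closed. apply (op_ext tau (fun _ => False)). tauto. apply Ht.
      * intros y Hy; exfalso; auto.
    + intros c1 c2 [<-|[]] [<-|[]]; auto.
    + intros x; exists ((fun _ : X => True), (fun _ : Y => True)); simpl; auto.
    + intros y; exists ((fun _ : X => True), (fun _ : Y => True)); simpl; auto.
  - destruct IH as [A [B [C D]]]. simpl. split; [|split; [|split]].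
    + intros c' Hc'. apply in_flat_map in Hc' as [c [Hc Hc']].
      destruct (Hr c _ (A c Hc) (eps_pos n)) as [G _]; auto.
    + intros c1 c2 H1 H2 [x [Hx1 Hx2]].
      apply in_flat_map in H1 as [p1 [Hp1 H1]]. apply in_flat_map in H2 as [p2 [Hp2 H2]].
      destruct (Hr p1 _ (A p1 Hp1) (eps_pos n)) as [_ [S1 _]].
      destruct (Hr p2 _ (A p2 Hp2) (eps_pos n)) as [_ [S2 _]].
      assert (p1 = p2) as <-.
      { apply B; auto. exists x; split. apply (S1 c1 H1); auto. apply (S2 c2 H2); auto. }
      destruct (Hr p1 _ (A p1 Hp1) (eps_pos n)) as [_ [_ [P _]]]. apply P; eauto.
    + intros x. destruct (C x) as [p [Hp Hx]].
      destruct (Hr p _ (A p Hp) (eps_pos n)) as [_ [_ [_ [Q _]]]].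
      destruct (Q x Hx) as [c [Hc Hcx]]. exists c; split; auto. apply in_flat_map; eauto.
    + intros y. destruct (D y) as [p [Hp Hy]].
      destruct (Hr p _ (A p Hp) (eps_pos n)) as [_ [_ [_ [_ [Q _]]]]].
      destruct (Q y Hy) as [c [Hc Hcy]]. exists c; split; auto. apply in_flat_map; eauto.
Qed.

Definition KnProps {X Y} (tau : set X -> Prop) (d : Y -> Y -> R) (Kn : nat -> X -> set Y) : Prop :=
  (forall n x, is_closed (metric_open d) (Kn n x) /\ exists y, Kn n x y) /\
  (forall n x y, Kn (S n) x y -> Kn n x y) /\
  (forall n x y y', Kn (S n) x y -> Kn (S n) x y' -> d y y' <= / INR (S n)) /\
  (forall n x, exists P, tau P /\ P x /\ forall x', P x' -> Kn n x' = Kn n x) /\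
  (forall n y, exists x, Kn n x y).

Lemma Kn_exists {X Y} (tau : set X -> Prop) (d : Y -> Y -> R) :
  is_topology tau -> zero_dimensional tau -> perfect tau -> T1_space tau -> inhabited X ->
  is_metric d -> compact_space (metric_open d) -> inhabited Y ->
  exists Kn, KnProps tau d Kn.
Proof.
  intros Ht Hz Hpf H1 HX Hm Hcp HY.
  destruct (refine_fun tau d Ht Hz Hpf H1 Hm Hcp) as [r Hr].
  pose proof (level_inv tau d r Ht HX HY Hr) as Inv.
  assert (cov : forall n x, exists c, In c (level r n) /\ fst c x) by (intros n; apply Inv).
  pose (ch := fun n x => proj1_sig (constructive_indefinite_description _ (cov n x))).
  assert (Hch : forall n x, In (ch n x) (level r n) /\ fst (ch n x) x).
  { intros n x; unfold ch; destruct (constructive_indefinite_description _ (cov n x)); auto. }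
  assert (Huq : forall n x c, In c (level r n) -> fst c x -> c = ch n x).
  { intros n x c Hc Hx. destruct (Inv n) as [_ [B _]]. apply B; auto. apply Hch.
    exists x; split; auto; apply Hch. }
  exists (fun n x => snd (ch n x)). split; [|split; [|split; [|split]]].
  - intros n x. destruct (Hch n x) as [Hin _]. destruct (Inv n) as [A _].
    destruct (A _ Hin) as [_ [_ [? ?]]]; auto.
  - intros n x y Hy. destruct (Hch (S n) x) as [Hin Hx]. simpl in Hin.
    apply in_flat_map in Hin as [p [Hp Hin]].
    destruct (Inv n) as [A _].
    destruct (Hr p _ (A p Hp) (eps_pos n)) as [_ [S1 _]].
    destruct (S1 _ Hin) as [SX SY].
    rewrite <- (Huq n x p Hp (SX x Hx)). apply SY; auto.
  - intros n x y y' Hy Hy'. destruct (Hch (S n) x) as [Hin Hx]. simpl in Hin.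
    apply in_flat_map in Hin as [p [Hp Hin]].
    destruct (Inv n) as [A _].
    destruct (Hr p _ (A p Hp) (eps_pos n)) as [_ [_ [_ [_ [_ D]]]]].
    eapply D; eauto.
  - intros n x. exists (fst (ch n x)). destruct (Hch n x) as [Hin Hx].
    destruct (Inv n) as [A _]. destruct (A _ Hin) as [_ [[HP _] _]].
    split; auto. split; auto. intros x' Hx'. rewrite <- (Huq n x' (ch n x) Hin Hx'); auto.
  - intros n y. destruct (Inv n) as [A [_ [_ D]]]. destruct (D y) as [c [Hc Hy]].
    destruct (A c Hc) as [[x Hx] _]. exists x. rewrite <- (Huq n x c Hc Hx); auto.
Qed.

Lemma f_exists {X Y} (tau : set X -> Prop) (d : Y -> Y -> R) Kn :
  is_topology tau -> compact_space tau -> is_metric d -> compact_space (metric_open d) ->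
  KnProps tau d Kn ->
  exists f : X -> Y, continuous tau (metric_open d) f /\ forall y, exists x, f x = y.
Proof.
  intros Ht Hc Hm HcY [Ka [Kb [Kc [Kd Ke]]]].
  assert (Kmono : forall n m, (n <= m)%nat -> forall x y, Kn m x y -> Kn n x y).
  { intros n m Hnm; induction Hnm; auto. }
  assert (Uq : forall x y y', (forall n, Kn n x y) -> (forall n, Kn n x y') -> y = y').
  { intros x y y' H H'. pose proof (d_nonneg d y y' Hm) as Hnn. destruct Hm as [Hd _]. apply Hd.
    destruct (Rle_lt_or_eq_dec 0 (d y y') Hnn) as [Hlt|Heq]; auto.
    exfalso. destruct (archimed_cor1 _ Hlt) as [N [HN HN0]]. destruct N as [|m]. lia.
    pose proof (Kc m x y y' (H (S m)) (H' (S m))). lra. }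
  assert (Ex : forall x, exists y, forall n, Kn n x y).
  { intros x. apply NNPP; intros Hn.
    destruct (compact_incr (metric_open d) (fun n y => ~ Kn n x y) HcY) as [N HN].
    - intros n. apply (Ka n x).
    - intros n y H1 H2; apply H1; auto.
    - intros y. apply NNPP; intros H1. apply Hn; exists y. intros n. apply NNPP; intros H2; eauto.
    - destruct (Ka N x) as [_ [y Hy]]. exact (HN y Hy). }
  pose (f := fun x => proj1_sig (constructive_indefinite_description _ (Ex x))).
  assert (Hf : forall x n, Kn n x (f x)).
  { intros x; unfold f; destruct (constructive_indefinite_description _ (Ex x)); auto. }
  exists f; split.
  - intros V HV. apply open_local; auto. intros x Hx.
    destruct (HV (f x) Hx) as [e [He HVe]].
    destruct (archimed_cor1 _ He) as [N [HN HN0]]. destruct N as [|m]. lia.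
    destruct (Kd (S m) x) as [P [HP [HPx HPK]]]. exists P; split; auto; split; auto.
    intros x' Hx'. apply HVe. pose proof (Hf x' (S m)) as H1. rewrite (HPK x' Hx') in H1.
    pose proof (Kc m x _ _ (Hf x (S m)) H1). lra.
  - intros y. assert (exists x, forall n, Kn n x y) as [x Hx].
    { apply NNPP; intros Hn.
      destruct (compact_incr tau (fun n x => ~ Kn n x y) Hc) as [N HN].
      - intros n. apply open_local; auto. intros x Hx. destruct (Kd n x) as [P [HP [HPx HPK]]].
        exists P; split; auto; split; auto. intros x' Hx'. rewrite (HPK x' Hx'); auto.
      - intros n x H1 H2; apply H1; auto.
      - intros x. apply NNPP; intros H1. apply Hn; exists x. intros n. apply NNPP; intros H2; eauto.
      - destruct (Ke N y) as [x Hx]. exact (HN x Hx). }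
    exists x. symmetry. apply (Uq x); auto.
Qed.

Lemma sig_eq {A} {P : A -> Prop} (z z' : {x | P x}) : proj1_sig z = proj1_sig z' -> z = z'.
Proof. destruct z as [x p], z' as [x' p']; simpl; intros ->; f_equal; apply proof_irrelevance. Qed.

Lemma cont_comp {A B C} (opA : set A -> Prop) (opB : set B -> Prop) (opC : set C -> Prop) h h' :
  continuous opA opB h -> continuous opB opC h' -> continuous opA opC (fun a => h' (h a)).
Proof. intros H H' V HV. exact (H _ (H' V HV)). Qed.

Lemma homeo_comp {A B C} (opA : set A -> Prop) (opB : set B -> Prop) (opC : set C -> Prop) :
  homeomorphic opA opB -> homeomorphic opB opC -> homeomorphic opA opC.
Proof.
  intros [h [g [H1 [H2 [H3 H4]]]]] [h' [g' [H1' [H2' [H3' H4']]]]].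
  exists (fun a => h' (h a)), (fun c => g (g' c)). split; [|split; [|split]].
  - intros a; rewrite H1'; auto.
  - intros c; rewrite H2; auto.
  - eapply cont_comp; eauto.
  - eapply cont_comp; eauto.
Qed.

Lemma transfer_metric {A B} (dA : A -> A -> R) (phi : A -> B) (psi : B -> A) :
  (forall a, psi (phi a) = a) -> (forall b, phi (psi b) = b) -> is_metric dA ->
  is_metric (fun b b' => dA (psi b) (psi b')).
Proof.
  intros Hpp Hqq [H1 [H2 H3]]. split; [|split]; intros.
  - split. intros H. apply H1 in H. rewrite <- (Hqq x), <- (Hqq y), H; auto.
    intros ->; apply H1; auto.
  - auto.
  - apply H3.
Qed.

Lemma mo_transfer {A B} (dA : A -> A -> R) (phi : A -> B) (psi : B -> A) U :
  (forall a, psi (phi a) = a) -> (forall b, phi (psi b) = b) ->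
  (metric_open (fun b b' => dA (psi b) (psi b')) U <-> metric_open dA (fun a => U (phi a))).
Proof.
  intros Hpp Hqq; split.
  - intros H a Ha. destruct (H (phi a) Ha) as [e [He Hy]]. exists e; split; auto.
    intros a' Ha'. apply Hy. rewrite !Hpp; auto.
  - intros H b Hb. assert (U (phi (psi b))) as Hb' by (rewrite Hqq; auto).
    destruct (H (psi b) Hb') as [e [He Hy]]. exists e; split; auto.
    intros b' Hb''. rewrite <- (Hqq b'). apply Hy; auto.
Qed.

Lemma mo_transfer2 {A B} (dA : A -> A -> R) (phi : A -> B) (psi : B -> A) U :
  (forall a, psi (phi a) = a) -> (forall b, phi (psi b) = b) ->
  metric_open dA U -> metric_open (fun b b' => dA (psi b) (psi b')) (fun b => U (psi b)).
Proof.
  intros Hpp Hqq H. apply (mo_transfer dA phi psi); auto.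
  apply (mo_ext dA U); auto. intros a; rewrite Hpp; tauto.
Qed.

Lemma conn_transfer {A B} (dA : A -> A -> R) (phi : A -> B) (psi : B -> A) S :
  (forall a, psi (phi a) = a) -> (forall b, phi (psi b) = b) ->
  connected_set (metric_open dA) S ->
  connected_set (metric_open (fun b b' => dA (psi b) (psi b'))) (fun b => S (psi b)).
Proof.
  intros Hpp Hqq Hc [U [V [HU [HV [Hcov [[b1 [Sb1 Ub1]] [[b2 [Sb2 Vb2]] Hd]]]]]]].
  apply Hc. exists (fun a => U (phi a)), (fun a => V (phi a)).
  split. apply (mo_transfer dA phi psi); auto.
  split. apply (mo_transfer dA phi psi); auto.
  split. intros a Ha. apply Hcov. rewrite Hpp; auto.
  split. exists (psi b1); rewrite Hqq; auto.
  split. exists (psi b2); rewrite Hqq; auto.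
  intros a Ha HUa HVa. apply (Hd (phi a)); auto. rewrite Hpp; auto.
Qed.

Lemma dendrite_transfer {A B} (dA : A -> A -> R) (phi : A -> B) (psi : B -> A) :
  (forall a, psi (phi a) = a) -> (forall b, phi (psi b) = b) ->
  dendrite A dA -> dendrite B (fun b b' => dA (psi b) (psi b')).
Proof.
  intros Hpp Hqq [Hm [[a0] [Hc [Hcon [Hlc Hnc]]]]].
  split; [|split; [|split; [|split; [|split]]]].
  - apply transfer_metric with phi; auto.
  - exact (inhabits (phi a0)).
  - intros C HC Hcov.
    destruct (Hc (fun U' => exists U, C U /\ U' = fun a => U (phi a))) as [l' [Hl1 Hl2]].
    + intros U' [U [HU ->]]. apply (mo_transfer dA phi psi); auto.
    + intros a. destruct (Hcov (phi a)) as [U [HU Ha]]. exists (fun a => U (phi a)); eauto.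
    + assert (exists l, (forall U, In U l -> C U) /\
         (forall U', In U' l' -> exists U, In U l /\ U' = fun a => U (phi a))) as [l [L1 L2]].
      { clear Hl2. induction l' as [|U' l' IH].
        - exists []; split; intros ? [].
        - destruct IH as [l [L1 L2]]. intros; apply Hl1; simpl; auto.
          destruct (Hl1 U' (or_introl eq_refl)) as [U [HU ->]].
          exists (U :: l); split.
          + intros V [<-|HV]; auto.
          + intros V' [<-|HV']. exists U; simpl; auto.
            destruct (L2 V' HV') as [V [? ?]]; exists V; simpl; auto. }
      exists l; split; auto. intros b. destruct (Hl2 (psi b)) as [U' [HU' Hb]].
      destruct (L2 U' HU') as [U [HU ->]]. exists U; split; auto. rewrite Hqq in Hb; auto.
  - exact (conn_transfer dA phi psi (fun _ => True) Hpp Hqq Hcon).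
  - intros U b HU Hb.
    assert (HU' : metric_open dA (fun a => U (phi a))) by (apply (mo_transfer dA phi psi); auto).
    destruct (Hlc _ (psi b) HU') as [V [HV [HVb [HVU HVc]]]]. rewrite Hqq; auto.
    exists (fun b => V (psi b)). split; [|split; [|split]].
    + apply mo_transfer2 with phi; auto.
    + auto.
    + intros y Hy. rewrite <- (Hqq y). auto.
    + apply conn_transfer with phi; auto.
  - intros [S HS]. apply Hnc. exists (fun a => S (phi a)).
    eapply homeo_comp; [|exact HS].
    assert (pq : forall b, S b -> S (phi (psi b))) by (intros b; rewrite Hqq; auto).
    exists (fun z : {a | S (phi a)} => exist S (phi (proj1_sig z)) (proj2_sig z)).
    exists (fun z : {b | S b} => exist (fun a => S (phi a)) (psi (proj1_sig z)) (pq _ (proj2_sig z))).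
    split; [|split; [|split]].
    + intros z; apply sig_eq; simpl; auto.
    + intros z; apply sig_eq; simpl; auto.
    + intros W [U [HU HW]]. exists (fun a => U (phi a)); split.
      apply (mo_transfer dA phi psi); auto.
      intros z; simpl. rewrite HW; simpl; tauto.
    + intros W [U [HU HW]]. exists (fun b => U (psi b)); split.
      apply mo_transfer2 with phi; auto.
      intros z; simpl. rewrite HW; simpl; tauto.
Qed.

Lemma far_open {Y} (d : Y -> Y -> R) c r : is_metric d -> metric_open d (fun z => r < d c z).
Proof.
  intros Hm z Hz. exists (d c z - r); split. lra.
  intros z' Hz'. destruct Hm as [_ [Hs Ht]]. pose proof (Ht c z' z). rewrite (Hs z' z) in H. lra.
Qed.

Lemma inv_decr n : / INR (S (S n)) < / INR (S n).
Proof.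
  apply Rinv_lt_contravar. apply Rmult_lt_0_compat; apply lt_0_INR; lia.
  apply lt_INR; lia.
Qed.

Lemma closed_map_lemma {X Y} (tau : set X -> Prop) (d : Y -> Y -> R) f :
  is_topology tau -> compact_space tau -> is_metric d -> continuous tau (metric_open d) f ->
  closed_map tau (metric_open d) f.
Proof.
  intros Ht Hc Hm Hf C HC y Hy.
  destruct (compact_incr tau (fun n x => ~ C x \/ / INR (S n) < d y (f x)) Hc) as [N HN].
  - intros n. apply top_union; auto. exact (Hf _ (far_open d y _ Hm)).
  - intros n x [H|H]; auto. right. pose proof (inv_decr n); lra.
  - intros x. destruct (classic (C x)) as [Hx|Hx]; [|exists 0%nat; auto].
    assert (f x <> y) by (intros <-; apply Hy; exists x; auto).
    assert (0 < d y (f x)).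
    { destruct (Rle_lt_or_eq_dec 0 _ (d_nonneg d y (f x) Hm)); auto.
      exfalso; apply H. symmetry. apply Hm; auto. }
    destruct (archimed_cor1 _ H0) as [M [HM HM0]]. destruct M as [|m]. lia.
    exists m; right; auto.
  - exists (/ INR (S N)); split. apply eps_pos.
    intros y' Hy' [x [Hx <-]]. destruct (HN x) as [H|H]; auto. lra.
Qed.

Lemma usc_lemma {X Y} (tau : set X -> Prop) (d : Y -> Y -> R) f :
  is_topology tau -> compact_space tau -> is_metric d -> continuous tau (metric_open d) f ->
  usc tau (Dfib f).
Proof.
  intros Ht Hc Hm Hf D U [y0 ->] HU HDU.
  assert (HC : is_closed tau (fun x => ~ U x)).
  { unfold is_closed. apply (op_ext tau U); auto. intros x; split; auto. apply NNPP. }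
  pose proof (closed_map_lemma tau d f Ht Hc Hm Hf _ HC) as HW.
  exists (fun x => ~ image f (fun x => ~ U x) (f x)). split; [|split].
  - exact (Hf _ HW).
  - intros x Hx [x' [Hx' He]]. apply Hx'. apply HDU. unfold fiber in *. congruence.
  - intros A [y ->] [x1 [Hx1 Hu]] x Hx. apply NNPP; intros Hn. apply Hu.
    exists x; split; auto. unfold fiber in *; congruence.
Qed.

Theorem mainTheorem1 (X : Type) (tau : set X -> Prop) (Y : Type) (d : Y -> Y -> R)
  (Htop : is_topology tau) (Hne : inhabited X)
  (Hzd : zero_dimensional tau) (Hperf : perfect tau) (Hcpt : compact_space tau)
  (HT1 : T1_space tau) (Hden : dendrite Y d) :
  exists f : X -> Y,
    continuous tau (metric_open d) f /\
    closed_map tau (metric_open d) f /\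
    (forall y, exists x, f x = y) /\
    usc tau (Dfib f) /\
    exists g : decomp_space (Dfib f) -> Y,
      homeomorphism (metric_open d) (decomp_top tau (Dfib f)) (hmap f) g /\
      let rho := fun D D' => d (g D) (g D') in
      is_metric rho /\
      (forall U, decomp_top tau (Dfib f) U <-> metric_open rho U) /\
      dendrite (decomp_space (Dfib f)) rho.
Proof.
  pose proof Hden as [Hm [HY [HcY _]]].
  destruct (Kn_exists tau d Htop Hzd Hperf HT1 Hne Hm HcY HY) as [Kn HK].
  destruct (f_exists tau d Kn Htop Hcpt Hm HcY HK) as [f [Hf Hsurj]].
  exists f. split; auto. split. apply closed_map_lemma; auto.
  split; auto. split. apply usc_lemma with d; auto.
  assert (Hg : forall D : decomp_space (Dfib f), exists y, proj1_sig D = fiber f y) by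
    (intros D; exact (proj2_sig D)).
  pose (g := fun D => proj1_sig (constructive_indefinite_description _ (Hg D))).
  assert (HgD : forall D, proj1_sig D = fiber f (g D)).
  { intros D; unfold g; destruct (constructive_indefinite_description _ (Hg D)); auto. }
  assert (G1 : forall y, g (hmap f y) = y).
  { intros y. destruct (Hsurj y) as [x Hx]. pose proof (HgD (hmap f y)) as H.
    simpl in H. assert (fiber f y x) by exact Hx. rewrite H in H0. unfold fiber in H0. congruence. }
  assert (G2 : forall D, hmap f (g D) = D).
  { intros D. apply sig_eq. simpl. rewrite HgD; auto. }
  assert (Cg : continuous (decomp_top tau (Dfib f)) (metric_open d) g).
  { intros V HV. unfold decomp_top. apply (op_ext tau (fun x => V (f x))); [|apply Hf; auto].
    intros x; split.
    - intros Hx. exists (hmap f (f x)). rewrite G1. split; auto. simpl. reflexivity.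
    - intros [D [HD Hx]]. rewrite HgD in Hx. unfold fiber in Hx. rewrite Hx; auto. }
  assert (Ch : continuous (metric_open d) (decomp_top tau (Dfib f)) (hmap f)).
  { intros V HV. unfold decomp_top in HV.
    assert (HE : forall x, (exists D, V D /\ proj1_sig D x) <-> V (hmap f (f x))).
    { intros x; split.
      - intros [D [HD Hx]]. rewrite HgD in Hx. unfold fiber in Hx. rewrite Hx, G2; auto.
      - intros H. exists (hmap f (f x)); split; auto. simpl; reflexivity. }
    assert (HC : is_closed tau (fun x => ~ V (hmap f (f x)))).
    { unfold is_closed. apply (op_ext tau _ _ (fun x => iff_trans (HE x) (conj (fun h => (fun h' => h' h)) (@NNPP _)))) in HV. exact HV. }
    pose proof (closed_map_lemma tau d f Htop Hcpt Hm Hf _ HC) as HW.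
    apply (mo_ext d (fun y => ~ image f (fun x => ~ V (hmap f (f x))) y)); [|exact HW]. intros y; split.
    - intros H. apply NNPP; intros Hn. destruct (Hsurj y) as [x Hx]. apply H. exists x; split; auto.
      rewrite Hx; auto.
    - intros H [x [Hx <-]]. auto. }
  exists g. split. split; [|split; [|split]]; auto.
  intros rho. unfold rho.
  split; [|split].
  - apply transfer_metric with (hmap f); auto.
  - intros U. rewrite (mo_transfer d (hmap f) g U G1 G2). split.
    + intros HU. exact (Ch _ HU).
    + intros HU. pose proof (Cg _ HU) as H. simpl in H.
      rewrite (set_ext (fun D => U (hmap f (g D))) U) in H; auto.
      intros D; rewrite G2; tauto.
  - apply dendrite_transfer with (hmap f); auto.
Qed.
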